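(* Let $\mathcal{N}$ be a classical channel from $X$ to $Y$ and $\mathcal{M}$ a classical channel from $X'$ to $Y$, both given in standard form. Then $\mathcal{N}\sim\mathcal{M}$ if and only if $\mathcal{N}=\mathcal{M}$, i.e. their transition matrices are identical (in particular $|X|=|X'|$).
   Context: A classical channel $\mathcal{N}$ from $X$ ($|X|=m$) to $Y$ ($|Y|=n$) has an $n\times m$ column-stochastic transition matrix $N=[\mathbf{p}_1\cdots\mathbf{p}_m]$. For $\mathbf{p}\in\mathrm{Prob}(n)$, $\|\mathbf{p}\|_{(k)}$ denotes the sum of its $k$ largest entries, and $\mathbf{p}\succ\mathbf{q}$ (vector majorization) means $\|\mathbf{p}\|_{(k)}\ge\|\mathbf{q}\|_{(k)}$ for all $k$. $\mathcal{N}$ is in standard form if: (1) the entries of each column are in non-increasing order; (2) the columns are in decreasing lexicographic order: for every $x\in[m-1]$ there is $\ell\in[n]$ with $\|\mathbf{p}_x\|_{(k)}=\|\mathbf{p}_{x+1}\|_{(k)}$ for all $k<\ell$ and $\|\mathbf{p}_x\|_{(\ell)}>\|\mathbf{p}_{x+1}\|_{(\ell)}$; (3) no column is majorized by a convex combination of the other columns. Classical channel majorization: $\mathcal{N}\succ\mathcal{M}$ if $\mathcal{M}=\Theta[\mathcal{N}]$ for a random permutation superchannel, i.e. $\Theta[\mathcal{N}]=\mathcal{D}^{YZ\to Y}\circ(\mathcal{N}\otimes\mathrm{id}^Z)\circ\mathcal{S}^{X'\to XZ}$ with $Z$ a finite classical system, $\mathcal{S},\mathcal{D}$ classical channels and $\mathcal{D}(\cdot\otimes\mathbf{e}_z)$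 doubly stochastic for every $z$. $\mathcal{N}\sim\mathcal{M}$ means $\mathcal{N}\succ\mathcal{M}$ and $\mathcal{M}\succ\mathcal{N}$. *)

(* Defs.v *)
(* Classical channels as column-stochastic matrices over an
   ordered field R (the paper works over the reals; the statement is purely
   order-algebraic, so we state it for every realFieldType). *)
From HB Require Import structures.
From mathcomp Require Import all_boot all_order all_algebra.
Set Implicit Arguments. Unset Strict Implicit. Unset Printing Implicit Defensive.
Import Order.TTheory GRing.Theory Num.Theory.
Local Open Scope ring_scope.

Section Defs.
Variable R : realFieldType.

Definition ksum (n : nat) (p : 'I_n -> R) (k : nat) : R :=
  \big[Num.max/0]_(S : {set 'I_n} | #|S| == k) \sum_(i in S) p i.

Definition vmaj (n : nat) (p q : 'I_n -> R) : Prop :=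
  forall k : nat, (1 <= k <= n)%N -> ksum q k <= ksum p k.

(* N : n x m column-stochastic transition matrix (channel X -> Y, |X|=m, |Y|=n) *)
Definition is_chan (n m : nat) (N : 'M[R]_(n, m)) : Prop :=
  (forall y x, 0 <= N y x) /\ (forall x, \sum_(y < n) N y x = 1).

Definition colv (n m : nat) (N : 'M[R]_(n, m)) (x : 'I_m) : 'I_n -> R :=
  fun y => N y x.

Definition standard_form (n m : nat) (N : 'M[R]_(n, m)) : Prop :=
  (forall (x : 'I_m) (i j : 'I_n), (i <= j)%N -> N j x <= N i x)
  /\ (forall x x1 : 'I_m, val x1 = (val x).+1 ->
        exists l : nat, (1 <= l <= n)%N /\
          (forall k : nat, (1 <= k)%N -> (k < l)%N ->
             ksum (colv N x) k = ksum (colv N x1) k) /\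
          ksum (colv N x1) l < ksum (colv N x) l)
  /\ (forall x : 'I_m,
        ~ exists lam : 'I_m -> R,
            (forall y, 0 <= lam y) /\ lam x = 0 /\ \sum_(y < m) lam y = 1 /\
            vmaj (fun i => \sum_(y < m) lam y * N i y) (colv N x)).

Definition theta (n m m' k : nat) (N : 'M[R]_(n, m))
  (S : 'I_m -> 'I_k -> 'I_m' -> R) (D : 'I_n -> 'I_n -> 'I_k -> R)
  : 'M[R]_(n, m') :=
  \matrix_(y < n, x' < m')
    \sum_(x < m) \sum_(z < k) \sum_(y' < n) D y y' z * N y' x * S x z x'.

Definition is_chanS (m m' k : nat) (S : 'I_m -> 'I_k -> 'I_m' -> R) : Prop :=
  (forall x z x', 0 <= S x z x') /\
  (forall x', \sum_(x < m) \sum_(z < k) S x z x' = 1).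

Definition is_dsD (n k : nat) (D : 'I_n -> 'I_n -> 'I_k -> R) : Prop :=
  (forall y y' z, 0 <= D y y' z) /\
  (forall y' z, \sum_(y < n) D y y' z = 1) /\
  (forall y z, \sum_(y' < n) D y y' z = 1).

Definition chan_maj (n m m' : nat) (N : 'M[R]_(n, m)) (M : 'M[R]_(n, m')) : Prop :=
  exists (k : nat) (S : 'I_m -> 'I_k -> 'I_m' -> R) (D : 'I_n -> 'I_n -> 'I_k -> R),
    is_chanS S /\ is_dsD D /\ M = theta N S D.

Definition chan_equiv (n m m' : nat) (N : 'M[R]_(n, m)) (M : 'M[R]_(n, m')) : Prop :=
  chan_maj N M /\ chan_maj M N.

End Defs.

(* Main.v *)
Require Import Defs.
From HB Require Import structures.
From mathcomp Require Import all_boot all_order all_algebra ring.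
Set Implicit Arguments. Unset Strict Implicit. Unset Printing Implicit Defensive.
Import Order.TTheory GRing.Theory Num.Theory.
Local Open Scope ring_scope.

Section S.
Variable R : realFieldType.
Variable n : nat.
Implicit Types p q w : 'I_n -> R.

Definition sortd p := forall i j : 'I_n, (i <= j)%N -> p j <= p i.
Definition Pk p (k : nat) := \sum_(j < n | (j < k)%N) p j.

Lemma card_lt k : (k <= n)%N -> #|[set j : 'I_n | (j < k)%N]| = k.
Proof.
move=> kn; rewrite -sum1_card.
under eq_bigl => j do rewrite inE.
by rewrite -(big_ord_widen (idx:=0%N) (op:=addn) (n1:=k) n (fun _ => 1%N) kn) sum1_card card_ord.
Qed.

Lemma sum_lt1 k : (k <= n)%N -> \sum_(j < n | (j < k)%N) (1:R) = k%:R.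
Proof.
move=> kn; rewrite -(big_ord_widen (idx:=0) (op:=+%R) (n1:=k) n (fun _ => (1:R)) kn).
by rewrite sumr_const card_ord.
Qed.

Lemma Pk_ind p k : Pk p k = \sum_(j < n) (j < k)%N%:R * p j.
Proof. by rewrite /Pk big_mkcond; apply: eq_bigr => j _; case: ifP; rewrite ?mul1r ?mul0r. Qed.

Lemma ind_sum k : (k <= n)%N -> \sum_(j < n) (j < k)%N%:R = k%:R :> R.
Proof. by move=> kn; rewrite -sum_lt1 // [RHS]big_mkcond; apply: eq_bigr => j _; case: ifP. Qed.

Lemma wbound p w k : sortd p -> (k <= n)%N ->
  (forall j, 0 <= w j <= 1) -> \sum_j w j = k%:R ->
  \sum_j w j * p j <= Pk p k.
Proof.
move=> sp kn w01 sw.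
case: k kn sw => [|k] kn sw.
  have w0 : forall j, w j = 0.
    move=> j; apply: (psumr_eq0P (P := predT)) => //.
    by move=> i _; case/andP: (w01 i).
  rewrite /Pk big1 ?big_pred0 // => j _; by rewrite w0 mul0r.
set c := p (Ordinal kn).
have key : forall j, w j * p j - (j < k.+1)%N%:R * p j
   <= w j * c - (j < k.+1)%N%:R * c.
  move=> j; case/andP: (w01 j) => w0 w1.
  case: (ltnP j k.+1) => jk /=.
  - rewrite !mul1r -subr_ge0.
    have -> : w j * c - c - (w j * p j - p j) = (1 - w j) * (p j - c) by ring.
    apply: mulr_ge0; first by rewrite subr_ge0.
    by rewrite subr_ge0; apply: sp; rewrite /= -ltnS.
  - rewrite !mul0r !subr0; apply: ler_wpM2l => //.
    by apply: sp => /=; rewrite ltnW.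
have H : \sum_j (w j * p j - (j < k.+1)%N%:R * p j)
   <= \sum_j (w j * c - (j < k.+1)%N%:R * c) by apply: ler_sum => j _; exact: key.
move: H; rewrite !sumrB -!mulr_suml sw -Pk_ind -ind_sum // subrr subr_le0; exact.
Qed.

Lemma ksum_le q k c : 0 <= c ->
  (forall S : {set 'I_n}, #|S| = k -> \sum_(i in S) q i <= c) -> ksum q k <= c.
Proof.
move=> c0 H; rewrite /ksum; apply: bigmax_le => // S /eqP; exact: H.
Qed.

Lemma ksum_ge q k (S : {set 'I_n}) : #|S| = k -> \sum_(i in S) q i <= ksum q k.
Proof.
move=> cS; rewrite /ksum; exact: (le_bigmax_cond (P := fun S : {set _} => #|S| == k) _ (fun S => \sum_(i in S) q i) (introT eqP cS)).
Qed.

Lemma sum_set_ind q (S : {set 'I_n}) : \sum_(i in S) q i = \sum_j (j \in S)%:R * q j.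
Proof. by rewrite big_mkcond; apply: eq_bigr => j _; case: ifP; rewrite ?mul1r ?mul0r. Qed.

Lemma sum_ind_card (S : {set 'I_n}) : \sum_j (j \in S)%:R = #|S|%:R :> R.
Proof.
rewrite -sum1_card natr_sum [RHS]big_mkcond; apply: eq_bigr => j _; by case: ifP.
Qed.

Lemma ksum_sorted p k : sortd p -> (forall j, 0 <= p j) -> (k <= n)%N ->
  ksum p k = Pk p k.
Proof.
move=> sp p0 kn; apply/eqP; rewrite eq_le; apply/andP; split.
  apply: ksum_le; first by apply: sumr_ge0.
  move=> S cS; rewrite sum_set_ind; apply: wbound => //.
    by move=> j; case: (j \in S); rewrite ?ler01 ?lexx.
  by rewrite sum_ind_card cS.
apply: le_trans (ksum_ge p (card_lt kn)).
by rewrite /Pk le_eqVlt; apply/orP; left; apply/eqP; apply: eq_bigl => j; rewrite inE.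
Qed.

Lemma Pk_S p (j : 'I_n) : Pk p j.+1 = Pk p j + p j.
Proof.
rewrite /Pk (bigD1 j) //= addrC; congr (_ + _); apply: eq_bigl => i.
rewrite ltnS leq_eqVlt -(inj_eq val_inj) /=.
by case: (ltngtP i j) => h //=; rewrite ?andbT ?andbF //; apply/negP => /eqP e; rewrite e ltnn in h.
Qed.

Lemma sorted_eq p q : sortd p -> sortd q -> (forall j, 0 <= p j) -> (forall j, 0 <= q j) ->
  (forall k, (1 <= k <= n)%N -> ksum p k = ksum q k) -> forall j, p j = q j.
Proof.
move=> sp sq p0 q0 H.
have HP : forall k, (k <= n)%N -> Pk p k = Pk q k.
  case=> [|k] kn; first by rewrite /Pk !big_pred0.
  by rewrite -!ksum_sorted // H.
move=> j; have := HP _ (ltn_ord j); rewrite !Pk_S HP ?(ltnW (ltn_ord j)) //.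
by move/addrI.
Qed.

Lemma Pk_ge0 p k : (forall j, 0 <= p j) -> 0 <= Pk p k.
Proof. by move=> p0; apply: sumr_ge0. Qed.

Lemma theta_bound m m' kk (N : 'M[R]_(n, m)) (S : 'I_m -> 'I_kk -> 'I_m' -> R)
  (D : 'I_n -> 'I_n -> 'I_kk -> R) (x' : 'I_m') k :
  (forall x, sortd (colv N x)) -> (forall y x, 0 <= N y x) -> is_chanS S -> is_dsD D ->
  (1 <= k <= n)%N ->
  ksum (colv (theta N S D) x') k <= \sum_x (\sum_z S x z x') * ksum (colv N x) k.
Proof.
move=> sN N0 [S0 S1] [D0 [D1 D2]] /andP [k1 kn].
under eq_bigr => x _ do rewrite (ksum_sorted (sN x) (fun j => N0 j x) kn).
have thE : forall y, colv (theta N S D) x' y = \sum_(x < m) \sum_(z < kk) \sum_(y' < n) D y y' z * N y' x * S x z x' by move=> y; rewrite /colv /theta mxE.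
move: (colv (theta N S D) x') thE => q thE.
apply: ksum_le.
  apply: sumr_ge0 => x _; apply: mulr_ge0; first by apply: sumr_ge0.
  by apply: Pk_ge0 => j; apply: N0.
move=> T cT.
rewrite (eq_bigr _ (fun y _ => thE y)).
rewrite exchange_big /=; apply: ler_sum => x _.
rewrite mulr_suml exchange_big /=; apply: ler_sum => z _.
have -> : \sum_(i in T) \sum_(y' < n) D i y' z * N y' x * S x z x' =
   S x z x' * \sum_(y' < n) (\sum_(i in T) D i y' z) * N y' x.
  rewrite exchange_big mulr_sumr; apply: eq_bigr => y' _.
  rewrite !mulr_suml mulr_sumr; apply: eq_bigr => i _; ring.
apply: ler_wpM2l; first exact: S0.
apply: wbound => //.
  exact: sN.
  move=> y'; apply/andP; split; first by apply: sumr_ge0.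
  rewrite -(D1 y' z); rewrite [X in _ <= X](bigID (fun i => i \in T)) /= lerDl.
  by apply: sumr_ge0.
rewrite exchange_big /= -cT -sum1_card natr_sum; apply: eq_bigr => i _.
by rewrite D2.
Qed.

Lemma comb_sorted m (N : 'M[R]_(n, m)) (lam : 'I_m -> R) :
  (forall x, sortd (colv N x)) -> (forall y, 0 <= lam y) ->
  sortd (fun i => \sum_y lam y * N i y).
Proof.
move=> sN l0 i j ij; apply: ler_sum => y _; apply: ler_wpM2l => //; exact: sN.
Qed.

Lemma ksum_comb m (N : 'M[R]_(n, m)) (lam : 'I_m -> R) k :
  (forall x, sortd (colv N x)) -> (forall y x, 0 <= N y x) -> (forall y, 0 <= lam y) ->
  (k <= n)%N ->
  ksum (fun i => \sum_y lam y * N i y) k = \sum_y lam y * ksum (colv N y) k.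
Proof.
move=> sN N0 l0 kn.
have v0 : forall j, 0 <= \sum_y lam y * N j y.
  by move=> j; apply: sumr_ge0 => y _; apply: mulr_ge0.
rewrite (ksum_sorted (comb_sorted sN l0) v0 kn).
rewrite /Pk exchange_big /=; apply: eq_bigr => y _.
by rewrite (ksum_sorted (sN y) (fun j => N0 j y) kn) mulr_sumr.
Qed.

Lemma diag_one m (N : 'M[R]_(n, m)) (C : 'I_m -> 'I_m -> R) x :
  (forall x, sortd (colv N x)) -> (forall y x, 0 <= N y x) ->
  (forall x : 'I_m,
        ~ exists lam : 'I_m -> R,
            (forall y, 0 <= lam y) /\ lam x = 0 /\ \sum_(y < m) lam y = 1 /\
            vmaj (fun i => \sum_(y < m) lam y * N i y) (colv N x)) ->
  (forall x y, 0 <= C x y) -> (forall x, \sum_y C x y = 1) ->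
  (forall x k, (1 <= k <= n)%N -> ksum (colv N x) k <= \sum_y C x y * ksum (colv N y) k) ->
  C x x = 1.
Proof.
move=> sN N0 c3 C0 C1 HC.
have Cx1 : C x x <= 1.
  rewrite -(C1 x) (bigD1 x) //= lerDl; apply: sumr_ge0 => y _; exact: C0.
case: (ltrP (C x x) 1) => [lt1|]; last by move=> h; apply/eqP; rewrite eq_le Cx1 h.
exfalso; apply: (c3 x).
set d := 1 - C x x.
have d0 : 0 < d by rewrite subr_gt0.
have sumo : \sum_(y | y != x) C x y = d.
  by apply/eqP; rewrite /d eq_sym subr_eq -(C1 x) (bigD1 x) //= addrC.
exists (fun y => if y == x then 0 else C x y / d); split; [|split; [|split]].
- by move=> y; case: eqP => // _; apply: divr_ge0; [exact: C0|exact: ltW].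
- by rewrite eqxx.
- rewrite (bigD1 x) //= eqxx add0r -[RHS](divff (lt0r_neq0 d0)) -sumo mulr_suml.
  by apply: eq_bigr => y /negbTE ->.
move=> k /andP [k1 kn].
rewrite ksum_comb //; last first.
  by move=> y; case: eqP => // _; apply: divr_ge0; [exact: C0|exact: ltW].
have := HC x k (introT andP (conj k1 kn)).
rewrite (bigD1 x) //= [X in _ -> _ <= X](bigD1 x) //= eqxx mul0r add0r -lerBlDl.
rewrite -{1}[ksum (colv N x) k]mul1r -mulrBl -/d => H.
rewrite -(ler_pM2l d0) mulr_sumr; apply: le_trans H _.
rewrite le_eqVlt; apply/orP; left; apply/eqP; apply: eq_bigr => y /negbTE ->.
by rewrite mulrA mulrCA divff ?mulr1 // lt0r_neq0.
Qed.

Definition lexlt (a b : nat -> R) := exists l : nat, (1 <= l <= n)%N /\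
  (forall k, (1 <= k)%N -> (k < l)%N -> a k = b k) /\ a l < b l.

Lemma lex_trans a b c : lexlt a b -> lexlt b c -> lexlt a c.
Proof.
move=> [l1 [hl1 [e1 lt1]]] [l2 [hl2 [e2 lt2]]].
case: (ltngtP l1 l2) => h.
- exists l1; split => //; split.
    by move=> k k1 kl; rewrite e1 // e2 // (ltn_trans kl h).
  by rewrite -(e2 l1) //; case/andP: hl1.
- exists l2; split => //; split.
    by move=> k k1 kl; rewrite e1 ?(ltn_trans kl h) // e2.
  by rewrite (e1 l2) //; case/andP: hl2.
- subst l2; exists l1; split => //; split; last exact: lt_trans lt1 lt2.
  by move=> k k1 kl; rewrite e1 // e2.
Qed.

Lemma lex_irr a : ~ lexlt a a.
Proof. by move=> [l [_ [_ h]]]; rewrite ltxx in h. Qed.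

Lemma lex_congr a a' b b' : (forall k, (1 <= k <= n)%N -> a k = a' k) ->
  (forall k, (1 <= k <= n)%N -> b k = b' k) -> lexlt a b -> lexlt a' b'.
Proof.
move=> ea eb [l [hl [e lt]]]; exists l; split => //; split.
  move=> k k1 kl; have kn : (1 <= k <= n)%N.
    by rewrite k1 /=; case/andP: hl => _ ln; exact: ltnW (leq_trans kl ln).
  by rewrite -ea // -eb // e.
by rewrite -ea // -eb.
Qed.

Lemma lex_chain m (F : 'I_m -> nat -> R) :
  (forall x x1 : 'I_m, val x1 = (val x).+1 -> lexlt (F x1) (F x)) ->
  forall x y : 'I_m, (x < y)%N -> lexlt (F y) (F x).
Proof.
move=> hs x y xy.
have [d hd] : exists d, val y = (val x + d.+1)%N.
  by exists (y - x.+1)%N; rewrite addnS -addSn subnKC.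
elim: d y hd {xy} => [|d IH] y hd.
  by apply: hs; rewrite hd addn1.
have y0m : (x + d.+1 < m)%N by apply: (ltn_trans _ (ltn_ord y)); rewrite hd !addnS.
apply: lex_trans (IH (Ordinal y0m) erefl).
by apply: hs; rewrite hd /= addnS.
Qed.

Lemma incr_ge m (h : 'I_m -> 'I_m) :
  (forall x y : 'I_m, (x < y)%N -> (h x < h y)%N) -> forall x : 'I_m, (x <= h x)%N.
Proof.
move=> hi [i Hi]; elim: i Hi => [|i IH] Hi //.
have Hi' : (i < m)%N := ltnW Hi.
exact: leq_ltn_trans (IH Hi') (hi (Ordinal Hi') (Ordinal Hi) (ltnSn i)).
Qed.

Lemma incr_id m (f g : 'I_m -> 'I_m) :
  (forall x y : 'I_m, (x < y)%N -> (f x < f y)%N) ->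
  (forall x y : 'I_m, (x < y)%N -> (g x < g y)%N) -> cancel f g -> forall x, f x = x.
Proof.
move=> fi gi fg x; apply: val_inj; apply/eqP; rewrite eqn_leq (incr_ge fi) andbT.
by rewrite -{2}(fg x) incr_ge.
Qed.

Lemma unit_row (I : finType) (r : I -> R) i : (forall j, 0 <= r j) -> \sum_j r j = 1 ->
  r i = 1 -> forall j, r j = (j == i)%:R.
Proof.
move=> r0 r1 ri j.
have H : \sum_(j | j != i) r j = 0.
  by apply: (@addrI _ (r i)); rewrite addr0 {2}ri -r1 [in RHS](bigD1 i).
case: eqP => [->//|/eqP ji]; exact: (psumr_eq0P (fun j _ => r0 j) H).
Qed.

Lemma entry_le1 (I : finType) (r : I -> R) i : (forall j, 0 <= r j) -> \sum_j r j = 1 -> r i <= 1.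
Proof.
move=> r0 r1; rewrite -r1 (bigD1 i) //= lerDl; by apply: sumr_ge0.
Qed.

Lemma nz_one (I J : finType) (A : J -> I -> R) (B : I -> J -> R) x x' :
  (forall x' y, 0 <= A x' y) -> (forall x', \sum_y A x' y = 1) ->
  (forall x y, 0 <= B x y) -> (forall x, \sum_y B x y = 1) ->
  \sum_y B x y * A y x = 1 -> B x x' != 0 -> A x' x = 1.
Proof.
move=> A0 A1 B0 B1 BA nz.
have H : \sum_y B x y * (1 - A y x) = 0.
  under eq_bigr => y _ do rewrite mulrBr mulr1.
  by rewrite sumrB B1 BA subrr.
have G : forall y, predT y -> 0 <= B x y * (1 - A y x).
  move=> y _; apply: mulr_ge0 => //; rewrite subr_ge0; exact: entry_le1.
have := psumr_eq0P G H (isT : predT x').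
by move=> /eqP; rewrite mulf_eq0 (negbTE nz) /= subr_eq0 => /eqP <-.
Qed.

Lemma exists_nz (I : finType) (r : I -> R) : \sum_j r j = 1 -> exists j, r j != 0.
Proof.
move=> r1; case: (pickP (fun j => r j != 0)) => [j hj|H]; first by exists j.
have : \sum_j r j = 0 by apply: big1 => j _; apply/eqP; exact: negbFE (H j).
by rewrite r1 => /eqP; rewrite oner_eq0.
Qed.

Lemma stoch_perm (I J : finType) (A : J -> I -> R) (B : I -> J -> R) :
  (forall x' y, 0 <= A x' y) -> (forall x', \sum_y A x' y = 1) ->
  (forall x y, 0 <= B x y) -> (forall x, \sum_y B x y = 1) ->
  (forall x, \sum_y B x y * A y x = 1) -> (forall x', \sum_y A x' y * B y x' = 1) ->
  exists (f : I -> J) (g : J -> I), cancel f g /\ cancel g f /\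
   (forall x y, A (f x) y = (y == x)%:R) /\ (forall x x', B x x' = (x' == f x)%:R).
Proof.
move=> A0 A1 B0 B1 BA AB.
have [f hf] := fin_all_exists (fun x => exists_nz (B1 x)).
have [g hg] := fin_all_exists (fun x' => exists_nz (A1 x')).
have Af : forall x, A (f x) x = 1 by move=> x; exact: (nz_one A0 A1 B0 B1 (BA x) (hf x)).
have Bg : forall x', B (g x') x' = 1 by move=> x'; exact: (nz_one B0 B1 A0 A1 (AB x') (hg x')).
have Bf : forall x, B x (f x) = 1.
  move=> x; apply: (nz_one B0 B1 A0 A1 (AB (f x))); by rewrite Af oner_eq0.
have Arow : forall x y, A (f x) y = (y == x)%:R by move=> x; exact: unit_row.
have Brow : forall x x', B x x' = (x' == f x)%:R by move=> x; exact: unit_row.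
exists f, g; split; [|split] => //.
- move=> x; have := hg (f x); rewrite Arow; case: (g (f x) =P x) => // _.
  by rewrite eqxx.
- move=> x'; have := Brow (g x') x'; rewrite Bg.
  case: (x' =P f (g x')) => [e _|_ H]; first by rewrite -e.
  by have := @oner_neq0 R; rewrite H /= eqxx.
Qed.

Lemma sum_delta (I : finType) (v : I -> R) x : \sum_y (y == x)%:R * v y = v x.
Proof.
rewrite (bigD1 x) //= eqxx mul1r big1 ?addr0 // => y /negbTE ->; by rewrite mul0r.
Qed.

Lemma maj_A m m' (N : 'M[R]_(n, m)) (M : 'M[R]_(n, m')) :
  is_chan N -> (forall x, sortd (colv N x)) -> chan_maj N M ->
  exists A : 'I_m' -> 'I_m -> R, (forall x' x, 0 <= A x' x) /\ (forall x', \sum_x A x' x = 1) /\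
  forall x' k, (1 <= k <= n)%N -> ksum (colv M x') k <= \sum_x A x' x * ksum (colv N x) k.
Proof.
move=> [N0 _] sN [kk [S [D [hS [hD ->]]]]].
exists (fun x' x => \sum_z S x z x'); split; [|split].
- by move=> x' x; apply: sumr_ge0 => z _; case: hS => S0 _; exact: S0.
- by case: hS.
- move=> x' k hk; exact: theta_bound.
Qed.

Lemma compose m1 m2 (F : 'I_m1 -> nat -> R) (G : 'I_m2 -> nat -> R)
  (A : 'I_m2 -> 'I_m1 -> R) (B : 'I_m1 -> 'I_m2 -> R) x k :
  (forall x y, 0 <= B x y) ->
  F x k <= \sum_x' B x x' * G x' k ->
  (forall x', G x' k <= \sum_y A x' y * F y k) ->
  F x k <= \sum_y (\sum_x' B x x' * A x' y) * F y k.
Proof.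
move=> B0 h1 h2; apply: le_trans h1 _.
under [X in _ <= X]eq_bigr => y _ do rewrite mulr_suml.
rewrite exchange_big /=; apply: ler_sum => x' _.
have -> : \sum_y B x x' * A x' y * F y k = B x x' * \sum_y A x' y * F y k.
  by rewrite mulr_sumr; apply: eq_bigr => y _; rewrite mulrA.
by apply: ler_wpM2l.
Qed.

Lemma rows_prod m1 m2 (A : 'I_m2 -> 'I_m1 -> R) (B : 'I_m1 -> 'I_m2 -> R) x :
  (forall x', \sum_y A x' y = 1) -> (forall x, \sum_y B x y = 1) ->
  \sum_y (\sum_x' B x x' * A x' y) = 1.
Proof.
move=> A1 B1; rewrite exchange_big /= -(B1 x); apply: eq_bigr => x' _.
by rewrite -mulr_sumr A1 mulr1.
Qed.

Lemma prod_ge0 m1 m2 (A : 'I_m2 -> 'I_m1 -> R) (B : 'I_m1 -> 'I_m2 -> R) :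
  (forall x y, 0 <= A x y) -> (forall x y, 0 <= B x y) ->
  forall x y, 0 <= \sum_x' B x x' * A x' y.
Proof. by move=> A0 B0 x y; apply: sumr_ge0 => x' _; apply: mulr_ge0. Qed.

End S.

Unset Implicit Arguments.

Lemma chan_maj_refl (R : realFieldType) (n m : nat) (N : 'M[R]_(n, m)) : chan_maj N N.
Proof.
exists 1%N, (fun x z x' => (x == x')%:R), (fun y y' z => (y == y')%:R).
split; [|split].
- split; first by move=> x z x'; apply: ler0n.
  move=> x'; under eq_bigr => x _ do rewrite big_ord1.
  by rewrite -[RHS](sum_delta (fun _ : 'I_m => (1:R)) x'); apply: eq_bigr => x _; rewrite mulr1.
- split; first by move=> *; apply: ler0n.
  split.
    move=> y' z; rewrite -[RHS](sum_delta (fun _ : 'I_n => (1:R)) y').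
    by apply: eq_bigr => y _; rewrite mulr1.
  move=> y z; rewrite -[RHS](sum_delta (fun _ : 'I_n => (1:R)) y).
  by apply: eq_bigr => y' _; rewrite mulr1 eq_sym.
- apply/matrixP => y x'; rewrite /theta mxE.
  have E : forall x, \sum_(z < 1) \sum_(y' < n) (y == y')%:R * N y' x * (x == x')%:R
           = (x == x')%:R * N y x.
    move=> x; rewrite big_ord1.
    under eq_bigr => y' _ do rewrite eq_sym -mulrA.
    by rewrite sum_delta mulrC.
  under eq_bigr => x _ do rewrite E.
  by rewrite sum_delta.
Qed.

Theorem theorem6 (R : realFieldType) (n m m' : nat)
  (N : 'M[R]_(n, m)) (M : 'M[R]_(n, m')) :
  is_chan N -> is_chan M -> standard_form N -> standard_form M ->
  (chan_equiv N M <-> exists e : m = m', castmx (erefl n, e) N = M).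
Proof.
move=> cN cM [s1N [s2N s3N]] [s1M [s2M s3M]].
have sN : forall x, sortd (colv N x) by move=> x i j ij; exact: s1N.
have sM : forall x, sortd (colv M x) by move=> x i j ij; exact: s1M.
have N0 : forall y x, 0 <= N y x by case: cN.
have M0 : forall y x, 0 <= M y x by case: cM.
split; last first.
  move=> [e <-]; subst m'; rewrite castmx_id; split; exact: chan_maj_refl.
move=> [hNM hMN].
have [A [A0 [A1 hA]]] := maj_A cN sN hNM.
have [B [B0 [B1 hB]]] := maj_A cM sM hMN.
have BA : forall x, \sum_x' B x x' * A x' x = 1.
  move=> x; apply: (diag_one (C := fun x y => \sum_x' B x x' * A x' y) x sN N0 s3N).
  - exact: prod_ge0.
  - by move=> x0; apply: rows_prod.
  - move=> x0 k hk; apply: (compose (F := fun x k => ksum (colv N x) k) (G := fun x k => ksum (colv M x) k)) => //;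
      [exact: hB| move=> x'; exact: hA].
have AB : forall x', \sum_x A x' x * B x x' = 1.
  move=> x; apply: (diag_one (C := fun x y => \sum_x' A x x' * B x' y) x sM M0 s3M).
  - exact: prod_ge0.
  - by move=> x0; apply: rows_prod.
  - move=> x0 k hk; apply: (compose (F := fun x k => ksum (colv M x) k) (G := fun x k => ksum (colv N x) k)) => //;
      [exact: hA| move=> x'; exact: hB].
have [f [g [fg [gf [Af Bf]]]]] := stoch_perm A0 A1 B0 B1 BA AB.
have FE : forall x k, (1 <= k <= n)%N -> ksum (colv N x) k = ksum (colv M (f x)) k.
  move=> x k hk; apply/eqP; rewrite eq_le; apply/andP; split.
    by have := hB x k hk; under eq_bigr => x' _ do rewrite Bf; rewrite sum_delta.
  by have := hA (f x) k hk; under eq_bigr => y _ do rewrite Af; rewrite sum_delta.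
have GE : forall x' k, (1 <= k <= n)%N -> ksum (colv M x') k = ksum (colv N (g x')) k.
  by move=> x' k hk; rewrite FE // gf.
have e : m = m'.
  apply/eqP; rewrite eqn_leq.
  have := leq_card f (can_inj fg); have := leq_card g (can_inj gf).
  by rewrite !card_ord => -> ->.
subst m'.
have chN := lex_chain (F := fun x => ksum (colv N x))
  (fun x x1 h => let: ex_intro l (conj hl (conj he hlt)) := s2N x x1 h in
     ex_intro _ l (conj hl (conj (fun k k1 kl => esym (he k k1 kl)) hlt))).
have chM := lex_chain (F := fun x => ksum (colv M x))
  (fun x x1 h => let: ex_intro l (conj hl (conj he hlt)) := s2M x x1 h in
     ex_intro _ l (conj hl (conj (fun k k1 kl => esym (he k k1 kl)) hlt))).
have fi : forall x y : 'I_m, (x < y)%N -> (f x < f y)%N.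
  move=> x y xy; case: (ltngtP (f x) (f y)) => // h.
  - exfalso; apply: (lex_irr (a := fun k => ksum (colv N x) k)).
    apply: lex_trans (chN _ _ xy).
    apply: (lex_congr _ _ (chM _ _ h)) => k hk; by rewrite FE.
  - have : f x = f y by apply: val_inj.
    by move/(can_inj fg) => exy; rewrite exy ltnn in xy.
have gi : forall x y : 'I_m, (x < y)%N -> (g x < g y)%N.
  move=> x y xy; case: (ltngtP (g x) (g y)) => // h.
  - exfalso; apply: (lex_irr (a := fun k => ksum (colv M x) k)).
    apply: lex_trans (chM _ _ xy).
    apply: (lex_congr _ _ (chN _ _ h)) => k hk; by rewrite GE.
  - have : g x = g y by apply: val_inj.
    by move/(can_inj gf) => exy; rewrite exy ltnn in xy.
have fid := incr_id fi gi fg.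
exists erefl; rewrite castmx_id; apply/matrixP => i j.
have := sorted_eq (sN j) (sM (f j)) (fun y => N0 y j) (fun y => M0 y (f j)) (FE j) i.
by rewrite fid.
Qed.
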